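(* Assume $0<\theta_1\le\dots\le\theta_N$, $m_i>0$, $\sigma>0$, $p>0$, and let $\mathbf y=\mathbf y^*\in\mathbb R^N_+$ be the (unique) positive solution of $$\sum_{k=1}^N m_k(y_k-y_i)+\sigma(\theta_i-y_i^p)y_i=0,\qquad i=1,\dots,N.$$ Let $\bar y=\frac1M\sum_i m_iy_i$. Then there exists an index $1\le i_0\le N$ such that $$\theta_i\le y_i^p\ \text{ for } i\le i_0,\qquad y_{i_0}\le\bar y\le y_{i_0+1},\qquad y_i^p\le\theta_i\ \text{ for } i\ge i_0+1,$$ where conditions involving the index $i_0+1$ are vacuous if $i_0=N$.
   Context: $\mathbb R^N_+$ denotes the set of vectors with all coordinates strictly positive; $M=\sum_i m_i$. *)

(* Defs.v *)
(* R : realType, indices 'I_N (0-based). *)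
From HB Require Import structures.
From mathcomp Require Import all_boot all_order all_algebra.
From mathcomp Require Import reals exp.
Set Implicit Arguments. Unset Strict Implicit. Unset Printing Implicit Defensive.
Import Order.TTheory GRing.Theory Num.Theory.
Local Open Scope ring_scope.

Definition wmean (R : realType) (N : nat) (m y : 'I_N -> R) : R :=
  (\sum_(i < N) m i * y i) / (\sum_(i < N) m i).

(* Main.v *)
Require Import Defs.
From HB Require Import structures.
From mathcomp Require Import all_boot all_order all_algebra.
From mathcomp Require Import reals exp ring lra.
Import Order.TTheory GRing.Theory Num.Theory.
Local Open Scope ring_scope.

Theorem lemma5p5 (R : realType) (N : nat) (theta m y : 'I_N -> R) (sigma p : R)
  (hN : (0 < N)%N)
  (htheta_pos : forall i : 'I_N, 0 < theta i)
  (htheta_mono : forall i j : 'I_N, (i <= j)%N -> theta i <= theta j)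
  (hm : forall i : 'I_N, 0 < m i)
  (hsigma : 0 < sigma) (hp : 0 < p)
  (hy_pos : forall i : 'I_N, 0 < y i)
  (hy_eq : forall i : 'I_N,
     \sum_(k < N) m k * (y k - y i) + sigma * (theta i - y i `^ p) * y i = 0) :
  exists i0 : 'I_N,
    (forall i : 'I_N, (i <= i0)%N -> theta i <= y i `^ p) /\
    y i0 <= wmean m y /\
    (forall j : 'I_N, nat_of_ord j = i0.+1 -> wmean m y <= y j) /\
    (forall i : 'I_N, (i0 < i)%N -> y i `^ p <= theta i).
Proof.
set M := \sum_(k < N) m k.
set S := \sum_(k < N) m k * y k.
set b := wmean m y.
have i00 : 'I_N := Ordinal hN.
have Mpos : 0 < M.
  rewrite /M (bigD1 i00) //=; apply: ltr_wpDr; last exact: hm.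
  by apply: sumr_ge0 => i _; apply/ltW.
have Sb : S = M * b by rewrite /b /wmean -/S -/M mulrC divfK // gt_eqF.
have key : forall i, M * (b - y i) = sigma * y i * (y i `^ p - theta i).
  move=> i; have := hy_eq i.
  have -> : \sum_(k < N) m k * (y k - y i) = S - M * y i.
    rewrite /S /M mulr_suml -sumrB; apply: eq_bigr => k _; by rewrite mulrBr.
  rewrite Sb => h; apply/eqP; rewrite -subr_eq0; apply/eqP; rewrite -h; ring.
have K1 : forall i, y i <= b -> theta i <= y i `^ p.
  move=> i hi; rewrite -subr_ge0.
  have hsy : 0 < sigma * y i by apply: mulr_gt0.
  rewrite -(pmulr_rge0 _ hsy) -key; apply: mulr_ge0; first exact: ltW.
  by rewrite subr_ge0.
have K2 : forall i, b < y i -> y i `^ p < theta i.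
  move=> i hi; rewrite -subr_gt0 -opprB oppr_gt0.
  have hsy : 0 < sigma * y i by apply: mulr_gt0.
  rewrite -(pmulr_rlt0 _ hsy) -key pmulr_rlt0 //.
  by rewrite subr_lt0.
have pref : forall i j : 'I_N, (i <= j)%N -> y j <= b -> y i <= b.
  move=> i j hij hj; rewrite leNgt; apply/negP => hi.
  have h1 := K2 _ hi; have h2 := K1 _ hj; have h3 := htheta_mono _ _ hij.
  have hl : y i `^ p < y j `^ p by apply: (lt_le_trans h1); apply: (le_trans h3).
  have : y i < y j.
    rewrite ltNge; apply/negP => hji.
    have h : y j `^ p <= y i `^ p.
      apply: (ge0_ler_powR (ltW hp)) => //; by rewrite nnegrE ltW.
    have := le_lt_trans h hl; by rewrite ltxx.
  move=> hlt; have := lt_le_trans hlt hj; by rewrite ltNge (ltW hi).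
have [i1 hi1] : exists i, y i <= b.
  case: (boolP [exists i, y i <= b]) => [/existsP //|/existsPn hall].
  exfalso.
  have : M * b < S.
    rewrite /M mulr_suml /S; apply: ltr_sum.
      by apply/hasP; exists i00; rewrite ?mem_index_enum.
    move=> i _; rewrite ltr_pM2l //; by have := hall i; rewrite -ltNge.
  by rewrite Sb ltxx.
case: (@arg_maxnP _ i1 (fun i => y i <= b) (fun i : 'I_N => nat_of_ord i) hi1) => i0 hi0 hmax.
exists i0; split; [|split; [|split]].
- move=> i hi; apply: K1; exact: pref hi hi0.
- exact: hi0.
- move=> j hj; rewrite leNgt; apply/negP => hjb.
  have := hmax j (ltW hjb); move=> h; have : (i0.+1 <= i0)%N by rewrite -hj. by rewrite ltnn.
- move=> i hi; apply/ltW/K2; rewrite ltNge; apply/negP => hib.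
  have h : (nat_of_ord i <= nat_of_ord i0)%N by exact: hmax i hib.
  have : (i0 < i0)%N by exact: (leq_trans hi h).
  by rewrite ltnn.
Qed.
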